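(* A vector $v=(v_{i,j})\in E$ belongs to $Q_{\min}^\star$ if and only if $\sum_{(i,j)\in I}v_{i,j}=0$ and $\sum_{(i,j)\in I_s}v_{i,j}\le0$ for every $s\in\{1,\dots,d\}$. A vector $v\in E$ belongs to $Q_{\max}^\star$ if and only if $\sum_{(i,j)\in I}v_{i,j}=0$ and $\sum_{(i,j)\in J}v_{i,j}\le0$ for every admissible subset $J\subset I$.
   Context: Let $d\ge1$, $I=\{(i,j)\in\mathbb{Z}^2:1\le i\le j\le d\}$, $E=\mathbb{R}^I$ with scalar product $\langle v|w\rangle_E=\sum_{(i,j)\in I}v_{i,j}w_{i,j}$. $Q_{\max}\subset E$ is the cone of $q=(q_{i,j})$ with $q_{i,j}\ge q_{i,j+1}$ and $q_{i,j}\le q_{i+1,j+1}$ for all $1\le i\le j<d$; $Q_{\min}\subset E$ is the cone of $q$ with $q_{i,j}\ge q_{i,j+1}$ and $q_{i,j}=q_{i+1,j+1}$ for all $1\le i\le j<d$. For a cone $P\subset E$, $P^\star=\{v\in E:\langle v|x\rangle_E\ge0\ \forall x\in P\}$. A subset $J\subset I$ is admissible if for every $(i,j)\in J$, the pairs $(i,j+1)$ and $(i-1,j-1)$ belong to $J$ whenever they belong to $I$. For $s\in\{1,\dots,d\}$, $I_s=\{(i,j)\in I: j-i\ge d-s\}$. *)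

(* Defs.v *)
From HB Require Import structures.
From mathcomp Require Import all_boot all_order all_algebra.
Set Implicit Arguments. Unset Strict Implicit. Unset Printing Implicit Defensive.
Import Order.TTheory GRing.Theory Num.Theory.
Local Open Scope ring_scope.

(* Indices are 1-based as in the paper: I = {(i,j) : 1 <= i <= j <= d}.
   An element of E = R^I is represented by a function v : nat -> nat -> R;
   only its values on I are ever used (scalar product, sums, cone conditions). *)

Definition inI (d i j : nat) : bool := [&& (1 <= i)%N, (i <= j)%N & (j <= d)%N].

Definition sumI {R : realFieldType} (d : nat) (F : nat -> nat -> R) : R :=
  \sum_(1 <= i < d.+1) \sum_(i <= j < d.+1) F i j.

Definition dotE {R : realFieldType} (d : nat) (v w : nat -> nat -> R) : R :=
  sumI d (fun i j => v i j * w i j).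

Definition Qmax {R : realFieldType} (d : nat) (q : nat -> nat -> R) : Prop :=
  forall i j : nat, (1 <= i)%N -> (i <= j)%N -> (j < d)%N ->
    q i j.+1 <= q i j /\ q i j <= q i.+1 j.+1.

Definition Qmin {R : realFieldType} (d : nat) (q : nat -> nat -> R) : Prop :=
  forall i j : nat, (1 <= i)%N -> (i <= j)%N -> (j < d)%N ->
    q i j.+1 <= q i j /\ q i j = q i.+1 j.+1.

Definition dual_cone {R : realFieldType} (d : nat)
  (P : (nat -> nat -> R) -> Prop) (v : nat -> nat -> R) : Prop :=
  forall x, P x -> 0 <= dotE d v x.

Definition subI (d : nat) (J : nat -> nat -> bool) : Prop :=
  forall i j, J i j -> inI d i j.

Definition admissible (d : nat) (J : nat -> nat -> bool) : Prop :=
  forall i j, J i j ->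
    (inI d i j.+1 -> J i j.+1) /\ (inI d i.-1 j.-1 -> J i.-1 j.-1).

Definition sumJ {R : realFieldType} (d : nat) (J : nat -> nat -> bool)
  (v : nat -> nat -> R) : R :=
  sumI d (fun i j => if J i j then v i j else 0).

Definition Is (d s i j : nat) : bool := (d - s <= j - i)%N.

(* Main.v *)
Require Import Defs.
From HB Require Import structures.
From mathcomp Require Import all_boot all_order all_algebra.
From Stdlib Require Import Lia.
Import Order.TTheory GRing.Theory Num.Theory.
Local Open Scope ring_scope.

Ltac nlia := repeat match goal with H : is_true (leq _ _) |- _ => move/ssrnat.leP: H => H
  | H : (leq _ _) = true |- _ => move/ssrnat.leP: H => H
  | H : (leq _ _) = false |- _ => move/negbT/negP/ssrnat.leP: H => H end;
  try apply/ssrnat.leP; unfold addn, subn, muln, addn_rec, subn_rec, muln_rec in *; lia.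

Section Aux.
Variable R : realFieldType.
Variable d : nat.

Lemma sumI_eq (F G : nat -> nat -> R) :
  (forall i j, inI d i j -> F i j = G i j) -> sumI d F = sumI d G.
Proof.
move=> H; rewrite /sumI; apply: eq_big_nat => i /andP[hi1 hi2].
apply: eq_big_nat => j /andP[hj1 hj2]; apply: H.
rewrite /inI hi1 hj1 /=; by rewrite -ltnS.
Qed.

Lemma sumI_add (F G : nat -> nat -> R) :
  sumI d (fun i j => F i j + G i j) = sumI d F + sumI d G.
Proof. rewrite /sumI -big_split; apply: eq_bigr => i _; exact: big_split. Qed.

Lemma sumI_scale c (F : nat -> nat -> R) :
  sumI d (fun i j => c * F i j) = c * sumI d F.
Proof. rewrite /sumI mulr_sumr; apply: eq_bigr => i _; by rewrite mulr_sumr. Qed.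

Lemma sumI_opp (F : nat -> nat -> R) :
  sumI d (fun i j => - F i j) = - sumI d F.
Proof. rewrite /sumI -sumrN; apply: eq_bigr => i _; by rewrite sumrN. Qed.

Lemma sumI_sub (F G : nat -> nat -> R) :
  sumI d (fun i j => F i j - G i j) = sumI d F - sumI d G.
Proof. by rewrite sumI_add sumI_opp. Qed.

Lemma sumI_0 : sumI d (fun _ _ => (0:R)) = 0.
Proof. rewrite /sumI big1 // => i _; by rewrite big1. Qed.

Lemma dot_const (v : nat -> nat -> R) c : dotE d v (fun _ _ => c) = c * sumI d v.
Proof. rewrite /dotE -sumI_scale; apply: sumI_eq => i j _; by rewrite mulrC. Qed.

Lemma dot_ind (v : nat -> nat -> R) (J : nat -> nat -> bool) :
  dotE d v (fun i j => if J i j then -1 else 0) = - sumJ d J v.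
Proof.
rewrite /dotE /sumJ -sumI_opp; apply: sumI_eq => i j _.
by case: (J i j); rewrite ?mulrN1 ?mulr0 ?oppr0.
Qed.

Lemma forward (P : (nat -> nat -> R) -> Prop) (v : nat -> nat -> R) :
  P (fun _ _ => 1) -> P (fun _ _ => -1) -> dual_cone d P v -> sumI d v = 0.
Proof.
move=> h1 h2 hv; have := hv _ h1; have := hv _ h2.
rewrite !dot_const mul1r mulN1r oppr_ge0 => a b.
by apply/eqP; rewrite eq_le a b.
Qed.

Definition Lst : seq (nat * nat) :=
  [seq p <- [seq (i, j) | i <- iota 0 d.+1, j <- iota 0 d.+1] | inI d p.1 p.2].

Lemma memL i j : ((i, j) \in Lst) = inI d i j.
Proof.
rewrite mem_filter; case H: (inI d i j) => //; rewrite andTb.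
apply/allpairsP; exists (i, j) => /=; move/and3P: H => [h1 h2 h3].
split => //; rewrite -/(iota 0 d.+1) mem_iota /= add0n ltnS ?h3 //; exact: leq_trans h2 h3.
Qed.

Lemma memL' p : (p \in Lst) = inI d p.1 p.2.
Proof. by case: p => i j; rewrite memL. Qed.

Lemma ex_min (T : eqType) (f : T -> R) (s : seq T) x0 :
  x0 \in s -> exists2 x, x \in s & forall y, y \in s -> f x <= f y.
Proof.
elim: s x0 => // a s IH x0 _.
case: s IH => [|b s] IH.
  exists a; first exact: mem_head.
  by move=> y; rewrite inE => /eqP ->.
have [x xs hx] := IH b (mem_head _ _).
have [h|h] := leP (f a) (f x).
  exists a; first exact: mem_head.
  move=> y; rewrite in_cons => /orP[/eqP ->//|ys].
  exact: le_trans h (hx _ ys).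
exists x; first by rewrite in_cons xs orbT.
move=> y; rewrite in_cons => /orP[/eqP ->|ys]; last exact: hx.
exact: ltW.
Qed.

Lemma count_le (T : eqType) (a b : pred T) s :
  (forall x, x \in s -> a x -> b x) -> (count a s <= count b s)%N.
Proof.
elim: s => //= y s IH H; rewrite leq_add //.
  case ay: (a y) => //=; by rewrite H ?mem_head.
apply: IH => x xs; apply: H; by rewrite in_cons xs orbT.
Qed.

Lemma count_lt (T : eqType) (a b : pred T) s :
  (forall x, x \in s -> a x -> b x) -> (exists2 x, x \in s & b x && ~~ a x) ->
  (count a s < count b s)%N.
Proof.
elim: s => [|y s IH] H [x]; first by [].
have H' : forall x, x \in s -> a x -> b x.
  move=> z zs; apply: H; by rewrite in_cons zs orbT.
rewrite in_cons => /orP[/eqP->|xs] /andP[bx nax] /=.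
  by rewrite (negbTE nax) bx add0n add1n ltnS count_le.
have := IH H' (ex_intro2 _ _ x xs (introT andP (conj bx nax))).
case ay: (a y); last by move=> h; apply: leq_trans h _; rewrite leq_addl.
by rewrite H ?mem_head // !add1n ltnS.
Qed.

Definition mu (q : nat -> nat -> R) : nat :=
  count (fun p => has (fun p' => q p'.1 p'.2 < q p.1 p.2) Lst) Lst.

Lemma dual_gen (v : nat -> nat -> R) (P : (nat -> nat -> R) -> Prop)
  (hd : (1 <= d)%N)
  (HP : forall q t, P q -> P (fun i j => Num.max (q i j) t))
  (HJ : forall q m, P q -> sumJ d (fun i j => inI d i j && (q i j <= m)) v <= 0)
  (Hs : sumI d v = 0) : forall q, P q -> 0 <= dotE d v q.
Proof.
have step : forall q, P q -> (forall q', P q' -> (mu q' < mu q)%N -> 0 <= dotE d v q') ->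
    0 <= dotE d v q.
  move=> q Pq IH.
  have L11 : (1, 1) \in Lst by rewrite memL /inI hd.
  have [p0 p0L p0min] := @ex_min _ (fun p => q p.1 p.2) _ _ L11.
  set m := q p0.1 p0.2 in p0min.
  case E: [seq p <- Lst | m < q p.1 p.2] => [|p1' s'].
    have hc : forall i j, inI d i j -> q i j = m.
      move=> i j hij; apply/eqP; rewrite eq_le.
      have hL : (i, j) \in Lst by rewrite memL.
      rewrite (p0min _ hL) andbT leNgt; apply/negP => hm.
      have : (i, j) \in [seq p <- Lst | m < q p.1 p.2] by rewrite mem_filter /= hm hL.
      by rewrite E.
    rewrite (_ : dotE d v q = dotE d v (fun _ _ => m)); last first.
      by rewrite /dotE; apply: sumI_eq => i j hij; rewrite hc.
    by rewrite dot_const Hs mulr0.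
  have hp1 : p1' \in [seq p <- Lst | m < q p.1 p.2] by rewrite E mem_head.
  have [p1 p1F p1min] := @ex_min _ (fun p => q p.1 p.2) _ _ hp1.
  move: p1F; rewrite mem_filter => /andP[mt p1L].
  set t := q p1.1 p1.2 in mt p1min.
  have dich : forall i j, inI d i j -> (q i j <= m) || (t <= q i j).
    move=> i j hij; have hL : (i, j) \in Lst by rewrite memL.
    case: (leP (q i j) m) => //= hm; apply: (p1min (i, j)).
    by rewrite mem_filter /= hm hL.
  set q' := fun i j => Num.max (q i j) t.
  set J := fun i j => inI d i j && (q i j <= m).
  have dec : dotE d v q = dotE d v q' - (t - m) * sumJ d J v.
    rewrite /dotE /sumJ -sumI_scale -sumI_sub; apply: sumI_eq => i j hij.
    rewrite /J hij /= /q'.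
    have hL : (i, j) \in Lst by rewrite memL.
    have := p0min _ hL => /= hmq.
    case: (leP (q i j) m) => hm.
      have -> : q i j = m by apply/eqP; rewrite eq_le hm hmq.
      rewrite max_r ?ltW // mulrBl (mulrC t) (mulrC m) opprB addrC subrK //.
    have := dich _ _ hij; rewrite leNgt hm /= => ht.
    by rewrite max_l // mulr0 subr0.
  have hq' : 0 <= dotE d v q'.
    apply: IH; first exact: HP.
    apply: count_lt.
      case=> i j hL /hasP[[i' j'] hL' /= hlt]; apply/hasP; exists (i', j') => //=.
      rewrite /q' in hlt.
      have hqt : t < q i j.
        have h0 : t <= Num.max (q i' j') t by rewrite le_max lexx orbT.
        by have := le_lt_trans h0 hlt; rewrite lt_max ltxx orbF.
      rewrite (max_l (ltW hqt)) in hlt.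
      have h0 : q i' j' <= Num.max (q i' j') t by rewrite le_max lexx.
      exact: le_lt_trans h0 hlt.
    exists p1 => //; apply/andP; split.
      apply/hasP; exists p0 => //.
    apply/hasPn => p' _ /=; rewrite -leNgt /q' /t max_r //.
    by rewrite le_max lexx orbT.
  rewrite dec subr_ge0; apply: le_trans hq'.
  apply: mulr_ge0_le0; first by rewrite subr_ge0 ltW.
  exact: HJ.
suff H : forall n q, P q -> (mu q <= n)%N -> 0 <= dotE d v q.
  by move=> q Pq; apply: (H (mu q)).
elim=> [|n IHn] q Pq hn; apply: step => // q' Pq' hlt.
  by move: (leq_trans hlt hn).
by apply: IHn => //; rewrite -ltnS; apply: leq_trans hlt hn.
Qed.

End Aux.

Lemma qdiag (R : realFieldType) d (q : nat -> nat -> R) : Qmin d q ->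
  forall i j, inI d i j -> q i j = q 1%N (j - i).+1.
Proof.
move=> Hq; elim=> [|i IH] j /and3P[h1 h2 h3]; first by [].
case: i IH h1 h2 => [|i'] IH h1 h2.
  by rewrite subn1 prednK.
have [_ e] := Hq i'.+1 j.-1 isT ltac:(nlia) ltac:(nlia).
rewrite prednK in e; last nlia.
rewrite -e IH; last by rewrite /inI; apply/and3P; split; nlia.
by rewrite (_ : (j.-1 - i'.+1 = j - i'.+2)%N) //; nlia.
Qed.

Lemma qmono (R : realFieldType) d (q : nat -> nat -> R) : Qmin d q ->
  forall a b, (1 <= a)%N -> (a <= b)%N -> (b <= d)%N -> q 1%N b <= q 1%N a.
Proof.
move=> Hq a; elim=> [|b IH] ha hab hbd; first by move: (leq_trans ha hab).
case: (ltnP a b.+1) => h; last by have -> : a = b.+1 by apply/eqP; rewrite eqn_leq hab h.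
have [e _] := Hq 1%N b isT ltac:(nlia) ltac:(nlia).
apply: le_trans e _; apply: IH => //; nlia.
Qed.

Theorem proposition2p4 (R : realFieldType) (d : nat) (hd : (1 <= d)%N) :
  (forall v : nat -> nat -> R,
     dual_cone d (@Qmin R d) v <->
     (sumI d v = 0 /\
      forall s : nat, (1 <= s)%N -> (s <= d)%N ->
        sumJ d (Is d s) v <= 0)) /\
  (forall v : nat -> nat -> R,
     dual_cone d (@Qmax R d) v <->
     (sumI d v = 0 /\
      forall J : nat -> nat -> bool, subI d J -> admissible d J ->
        sumJ d J v <= 0)).
Proof.
split=> v; split.
- move=> hv; split.
    apply: (@forward R d (Qmin d)) => // i j _ _ _; by split.
  move=> s hs1 hs2.
  have := hv (fun i j => if Is d s i j then -1 else 0).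
  rewrite dot_ind oppr_ge0; apply=> i j h1 h2 h3; rewrite /Is.
  rewrite subSS; split => //.
  case E1: (d - s <= j - i)%N.
    by rewrite (leq_trans E1 (leq_sub2r _ (leqnSn _))).
  by case: (_ <= j.+1 - i)%N; rewrite ?lexx ?lerN10.
- case=> Hs HI; apply: (@dual_gen R d v (Qmin d) hd) => //.
    move=> q t Hq i j h1 h2 h3; have [a b] := Hq i j h1 h2 h3; split.
      exact: le_max2.
    by rewrite b.
  move=> q m Hq.
  case: (leP (q 1%N d) m) => hm.
    have ex : exists k, (q 1%N k.+1 <= m) && (k < d)%N.
      by exists (d - 1)%N; rewrite (_ : (d - 1).+1 = d)%N ?hm ?ltnSn // ; nlia.
    case: (ex_minnP ex) => k0 /andP[hk0 hk0d] kmin.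
    have -> : sumJ d (fun i j => inI d i j && (q i j <= m)) v = sumJ d (Is d (d - k0)) v.
      rewrite /sumJ; apply: sumI_eq => i j hij; rewrite hij /= /Is.
      rewrite (@qdiag _ _ _ Hq _ _ hij) (_ : (d - (d - k0)) = k0)%N; last nlia.
      move/and3P: hij => [h1 h2 h3].
      case E: (k0 <= j - i)%N.
        rewrite (le_trans _ hk0) //; apply: (@qmono _ d _ Hq); nlia.
      suff hq : ~~ (q 1%N (j - i).+1 <= m) by rewrite (negbTE hq).
      apply/negP => hq; have := kmin (j - i)%N.
      rewrite hq /= E => H; suff : false by []; apply: H; nlia.
    apply: HI; nlia.
  have -> : sumJ d (fun i j => inI d i j && (q i j <= m)) v = sumJ d (fun _ _ => false) v.
    rewrite /sumJ; apply: sumI_eq => i j hij; rewrite hij /=.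
    rewrite (@qdiag _ _ _ Hq _ _ hij) leNgt (lt_le_trans hm) //.
    move/and3P: hij => [h1 h2 h3]; apply: (@qmono _ d _ Hq) => //; nlia.
  by rewrite /sumJ sumI_0.
- move=> hv; split.
    apply: (@forward R d (Qmax d)) => // i j _ _ _; by split.
  move=> J hsub hadm.
  have := hv (fun i j => if J i j then -1 else 0).
  rewrite dot_ind oppr_ge0; apply=> i j h1 h2 h3.
  have hI : inI d i j by rewrite /inI h1 h2 ltnW.
  case E1: (J i j).
    have [a _] := hadm i j E1.
    rewrite (a ltac:(rewrite /inI h1 (leq_trans h2 (leqnSn _)) h3 //)).
    split => //; case: (J i.+1 j.+1); by rewrite ?lexx ?lerN10.
  case E2: (J i.+1 j.+1).
    have [_ b] := hadm _ _ E2; move: (b hI) => /=; by rewrite E1.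
  split => //; case: (J i j.+1); by rewrite ?lexx ?lerN10.
- case=> Hs HI; apply: (@dual_gen R d v (Qmax d) hd) => //.
    move=> q t Hq i j h1 h2 h3; have [a b] := Hq i j h1 h2 h3; split; exact: le_max2.
  move=> q m Hq; apply: HI.
    by move=> i j /andP[].
  move=> i j /andP[hij hq]; split.
    move=> h; rewrite h /=; apply: le_trans hq.
    move/and3P: hij => [h1 h2 h3].
    by have [a _] := Hq i j h1 h2 ltac:(move/and3P: h => [_ _ h4]; exact: h4).
  move=> h; rewrite h /=; apply: le_trans hq.
  move/and3P: h => [h1 h2 h3]; move/and3P: hij => [k1 k2 k3].
  have [_ b] := Hq i.-1 j.-1 h1 h2 ltac:(nlia).
  by rewrite !prednK in b => //; nlia.
Qed.
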